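(* Let $\mathcal{H}$ be a complex separable Hilbert space and let $A$ be a bounded, positive, injective operator on $\mathcal{H}$ that is Hankel with respect to an isometry $V$, i.e. $V^*A = AV$. Then the Wold decomposition of $V$ has the form $V = V_0 \oplus J$ on $\mathcal{H} = \mathcal{H}_0 \oplus \mathcal{H}'$, where $V_0$ is a pure isometry on $\mathcal{H}_0$ and $J$ is a self-adjoint unitary on $\mathcal{H}' = \mathcal{H}'_+ \oplus \mathcal{H}'_-$ with $Jh = h$ for $h \in \mathcal{H}'_+$ and $Jh = -h$ for $h \in \mathcal{H}'_-$. The subspaces $\mathcal{H}_0$, $\mathcal{H}'_+$ and $\mathcal{H}'_-$ are each invariant under $A$. If in addition $AV > 0$, then $\mathcal{H}'_- = \{0\}$ and $J = I$.
   Context: An operator $T$ is positive, written $T>0$, if $\langle Tx,x\rangle \ge 0$ for all $x$ in its domain and $T$ is injective. A pure isometry is one unitarily equivalent to the unilateral shift $M_z$ on $H^2 \otimes \mathbb{C}^n$ for some $n$. The Wold decomposition writes an isometry as the orthogonal direct sum of its pure part and a unitary part. *)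

(* Defs.v *)
From HB Require Import structures.
From mathcomp Require Import all_boot all_order all_algebra.
From mathcomp Require Import complex reals.
Set Implicit Arguments. Unset Strict Implicit. Unset Printing Implicit Defensive.
Import Order.TTheory GRing.Theory Num.Theory.
Local Open Scope ring_scope.

Section Hilbert.
Variables (R : realType) (H : lmodType R[i]) (ip : H -> H -> R[i]).

Definition inner_product : Prop :=
  [/\ (forall (a : R[i]) (x y z : H), ip (a *: x + y) z = a * ip x z + ip y z),
      (forall x y : H, ip y x = (ip x y)^*),
      (forall x : H, 0 <= ip x x) &
      (forall x : H, ip x x = 0 -> x = 0)].

(* squared norm ||x||^2 = <x,x>; comparisons are in the (partial) order of R[i],
   where 0 < e forces e to be a positive real. *)
Definition nsq (x : H) : R[i] := ip x x.

Definition converges (u : nat -> H) (x : H) : Prop :=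
  forall e : R[i], 0 < e -> exists N, forall n, (N <= n)%N -> nsq (u n - x) < e.

Definition cauchy_seq (u : nat -> H) : Prop :=
  forall e : R[i], 0 < e -> exists N, forall m n, (N <= m)%N -> (N <= n)%N ->
    nsq (u m - u n) < e.

Definition complete_space : Prop :=
  forall u, cauchy_seq u -> exists x, converges u x.

Definition separable_space : Prop :=
  exists d : nat -> H, forall (x : H) (e : R[i]), 0 < e -> exists k, nsq (x - d k) < e.

Definition is_linear (T : H -> H) : Prop :=
  forall (a : R[i]) (x y : H), T (a *: x + y) = a *: T x + T y.

Definition bounded_op (T : H -> H) : Prop :=
  is_linear T /\ exists M : R[i], forall x, nsq (T x) <= M * nsq x.

Definition is_adjoint (T Ts : H -> H) : Prop :=
  forall x y, ip (T x) y = ip x (Ts y).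

Definition isometry_op (V : H -> H) : Prop :=
  bounded_op V /\ forall x, nsq (V x) = nsq x.

Definition positive_op (T : H -> H) : Prop :=
  (forall x, 0 <= ip (T x) x) /\ injective T.

Definition subspace (S : H -> Prop) : Prop :=
  S 0 /\ forall (a : R[i]) x y, S x -> S y -> S (a *: x + y).

Definition closed_set (S : H -> Prop) : Prop :=
  forall u x, (forall n, S (u n)) -> converges u x -> S x.

Definition closed_subspace (S : H -> Prop) : Prop := subspace S /\ closed_set S.

Definition orthogonal_sets (S T : H -> Prop) : Prop :=
  forall x y, S x -> T y -> ip x y = 0.

Definition invariant_set (T : H -> H) (S : H -> Prop) : Prop :=
  forall x, S x -> S (T x).

Definition in_closed_span (F : H -> Prop) (x : H) : Prop :=
  forall e : R[i], 0 < e -> exists s : seq (R[i] * H),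
    (forall p, p \in s -> F p.2) /\ nsq (x - \sum_(p <- s) p.1 *: p.2) < e.

(* V restricted to H0 is unitarily equivalent to the unilateral shift M_z on
   H^2 (x) C^n, n = #{i | P i} in {0,1,...,oo}: the unitary sends the orthonormal
   basis z^k (x) eps_i of H^2 (x) C^n to e k i. *)
Definition pure_isometry_on (V : H -> H) (H0 : H -> Prop) : Prop :=
  exists (P : nat -> Prop) (e : nat -> nat -> H),
    [/\ (forall k i l j, P i -> P j ->
           ip (e k i) (e l j) = if (k == l) && (i == j) then 1 else 0),
        (forall k i, P i -> V (e k i) = e k.+1 i) &
        (forall x, H0 x <-> in_closed_span (fun y => exists k i, P i /\ y = e k i) x)].

End Hilbert.

(* Main.v *)
Require Import Defs.
From HB Require Import structures.
From mathcomp Require Import all_boot all_order all_algebra.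
From mathcomp Require Import complex reals.
From mathcomp Require Import ring lra.
From mathcomp Require Import classical_sets.
Import Order.TTheory GRing.Theory Num.Theory.
Local Open Scope ring_scope.
Set Implicit Arguments. Unset Strict Implicit.

Section Basic.
Variables (R : realType) (H : lmodType R[i]) (ip : H -> H -> R[i]).
Hypothesis Hip : inner_product ip.
Local Notation C := (R[i]).
Local Notation nsq := (nsq ip).

Lemma cjD (a b : C) : (a + b)^* = a^* + b^*. Proof. exact: rmorphD. Qed.
Lemma cjB (a b : C) : (a - b)^* = a^* - b^*. Proof. exact: rmorphB. Qed.
Lemma cjN (a : C) : (- a)^* = - a^*. Proof. exact: rmorphN. Qed.
Lemma cjM (a b : C) : (a * b)^* = a^* * b^*. Proof. exact: rmorphM. Qed.
Lemma cjV (a : C) : (a^-1)^* = (a^*)^-1. Proof. exact: fmorphV. Qed.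
Lemma cjX (a : C) n : (a ^+ n)^* = (a^*) ^+ n. Proof. exact: rmorphXn. Qed.

Lemma ipDZl a x y z : ip (a *: x + y) z = a * ip x z + ip y z.
Proof. by case: Hip. Qed.
Lemma ipC x y : ip y x = (ip x y)^*.
Proof. by case: Hip. Qed.
Lemma nsq_ge0 x : 0 <= nsq x.
Proof. by case: Hip => _ _ ->. Qed.
Lemma nsq_eq0 x : nsq x = 0 -> x = 0.
Proof. by move=> h; case: Hip => _ _ _ /(_ x h). Qed.

Lemma ip0l z : ip 0 z = 0.
Proof.
have := ipDZl 1 0 0 z; rewrite scaler0 addr0 mul1r.
by rewrite -{1}[ip 0 z]addr0 => /addrI <-.
Qed.
Lemma ipDl x y z : ip (x + y) z = ip x z + ip y z.
Proof. by rewrite -[x]scale1r ipDZl mul1r scale1r. Qed.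
Lemma ipZl a x z : ip (a *: x) z = a * ip x z.
Proof. by rewrite -[a *: x]addr0 ipDZl ip0l addr0. Qed.
Lemma ipNl x z : ip (- x) z = - ip x z.
Proof. by rewrite -scaleN1r ipZl mulN1r. Qed.
Lemma ipBl x y z : ip (x - y) z = ip x z - ip y z.
Proof. by rewrite ipDl ipNl. Qed.
Lemma ip0r z : ip z 0 = 0.
Proof. by rewrite ipC ip0l conjC0. Qed.
Lemma ipDr x y z : ip z (x + y) = ip z x + ip z y.
Proof. by rewrite !(ipC _ z) ipDl cjD. Qed.
Lemma ipZr a x z : ip z (a *: x) = a^* * ip z x.
Proof. by rewrite !(ipC _ z) ipZl cjM. Qed.
Lemma ipNr x z : ip z (- x) = - ip z x.
Proof. by rewrite !(ipC _ z) ipNl cjN. Qed.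
Lemma ipBr x y z : ip z (x - y) = ip z x - ip z y.
Proof. by rewrite ipDr ipNr. Qed.

Lemma ip_suml (s : seq (C * H)) z :
  ip (\sum_(p <- s) p.1 *: p.2) z = \sum_(p <- s) p.1 * ip p.2 z.
Proof.
elim: s => [|p s IH]; first by rewrite !big_nil ip0l.
by rewrite !big_cons ipDl ipZl IH.
Qed.

Lemma nsq_real x : nsq x \is Num.real.
Proof. exact: ger0_real (nsq_ge0 x). Qed.
Lemma nsq_conj x : (nsq x)^* = nsq x.
Proof. exact: geC0_conj (nsq_ge0 x). Qed.

Lemma nsq0 : nsq 0 = 0.
Proof. by rewrite /Defs.nsq ip0l. Qed.

Lemma nsqD x y : nsq (x + y) = nsq x + nsq y + (ip x y + ip y x).
Proof. rewrite /Defs.nsq ipDl !ipDr. ring. Qed.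

Lemma nsqB x y : nsq (x - y) = nsq x + nsq y - (ip x y + ip y x).
Proof. rewrite /Defs.nsq ipBl !ipBr. ring. Qed.

Lemma nsqN x : nsq (- x) = nsq x.
Proof. by rewrite /Defs.nsq ipNl ipNr opprK. Qed.

Lemma nsq_sym x y : nsq (x - y) = nsq (y - x).
Proof. by rewrite -nsqN opprB. Qed.

Lemma nsqZ a x : nsq (a *: x) = a * a^* * nsq x.
Proof. by rewrite /Defs.nsq ipZl ipZr mulrA [a * _]mulrC. Qed.

Lemma nsqD_le x y : nsq (x + y) <= nsq x *+ 2 + nsq y *+ 2.
Proof.
have e : nsq (x + y) + nsq (x - y) = nsq x *+ 2 + nsq y *+ 2.
  rewrite nsqD nsqB; ring.
by rewrite -e lerDl nsq_ge0.
Qed.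

Lemma ip_extr u v : (forall z, ip z u = ip z v) -> u = v.
Proof.
move=> h; apply/eqP; rewrite -subr_eq0; apply/eqP/nsq_eq0.
by rewrite /Defs.nsq ipBr h subrr.
Qed.

Lemma ip_extl u v : (forall z, ip u z = ip v z) -> u = v.
Proof.
move=> h; apply: ip_extr => z; by rewrite ipC h -ipC.
Qed.

Lemma polar (D : H -> H -> C) :
  (forall a x y z, D (a *: x + y) z = a * D x z + D y z) ->
  (forall a x y z, D z (a *: x + y) = a^* * D z x + D z y) ->
  (forall z, D z z = 0) -> forall x y, D x y = 0.
Proof.
move=> h1 h2 h0 x y.
have D1 : forall x y z, D (x + y) z = D x z + D y z.
  by move=> x1 y1 z1; have := h1 1 x1 y1 z1; rewrite scale1r mul1r.
have D2 : forall x y z, D z (x + y) = D z x + D z y.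
  by move=> x1 y1 z1; have := h2 1 x1 y1 z1; rewrite scale1r conjC1 mul1r.
have Z1 : forall a x z, D (a *: x) z = a * D x z.
  move=> a x1 z1; have := h1 a x1 0 z1; rewrite addr0 => ->.
  have := h1 1 0 0 z1; rewrite scaler0 addr0 mul1r.
  by rewrite -{1}[D 0 z1]addr0 => /addrI <-; rewrite addr0.
have Z2 : forall a x z, D z (a *: x) = a^* * D z x.
  move=> a x1 z1; have := h2 a x1 0 z1; rewrite addr0 => ->.
  have := h2 1 0 0 z1; rewrite scaler0 addr0 conjC1 mul1r.
  by rewrite -{1}[D z1 0]addr0 => /addrI <-; rewrite addr0.
have e1 := h0 (x + y); rewrite D1 !D2 !h0 add0r addr0 in e1.
have e2 := h0 (x + 'i *: y); rewrite D1 !D2 !Z1 !Z2 !h0 conjCi in e2.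
have e4 : D x y * ('i *+ 2) = 0.
  rewrite -[RHS](_ : 'i * 0 - 0 = 0); last by rewrite mulr0 subrr.
  rewrite -{1}e1 -e2; ring.
move/eqP: e4; rewrite mulf_eq0 => /orP[/eqP //|].
by rewrite mulrn_eq0 /= (negPf (neq0Ci _)).
Qed.

Lemma CSineq x y : ip x y * (ip x y)^* <= nsq x * nsq y.
Proof.
have [y0|ny] := eqVneq y 0.
  by rewrite y0 ip0r mul0r nsq0 mulr0.
have npos : 0 < nsq y.
  rewrite lt_def nsq_ge0 andbT; apply/eqP => /nsq_eq0 /eqP; exact/negP.
have nn0 : nsq y != 0 by rewrite gt_eqF.
set c := ip x y; set n := nsq y.
have key : nsq (x - (c / n) *: y) = nsq x - c * c^* / n.
  rewrite nsqB nsqZ ipZr ipZl -/c -/n (ipC x y) -/c cjM cjV.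
  rewrite /n nsq_conj -/n. field. done.
have := nsq_ge0 (x - (c / n) *: y); rewrite key subr_ge0.
by rewrite ler_pdivrMr.
Qed.

Lemma small0 (z : C) : 0 <= z -> (forall e, 0 < e -> z < e) -> z = 0.
Proof.
move=> z0 h; apply/eqP; apply: contraT => nz.
have zp : 0 < z by rewrite lt_def nz z0.
by have := h z zp; rewrite ltxx.
Qed.

Lemma orth_approx x y :
  (forall e, 0 < e -> exists w, ip w y = 0 /\ nsq (x - w) < e) -> ip x y = 0.
Proof.
move=> h.
have K0 : 0 <= nsq y := nsq_ge0 y.
have: ip x y * (ip x y)^* = 0.
  apply: small0; first exact: mul_conjC_ge0.
  move=> e e0.
  have e1 : 0 < e / (nsq y + 1) by rewrite divr_gt0 // ltr_wpDl.
  have [w [hw1 hw2]] := h _ e1.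
  have eq1 : ip x y = ip (x - w) y by rewrite ipBl hw1 subr0.
  apply: (le_lt_trans (_ : _ <= nsq (x - w) * nsq y)).
    by rewrite eq1; apply: CSineq.
  apply: (le_lt_trans (_ : _ <= e / (nsq y + 1) * nsq y)).
    by rewrite ler_wpM2r // ltW.
  rewrite mulrAC ltr_pdivrMr ?ltr_wpDl //.
  by rewrite ltr_pM2l // ltrDl.
by move/eqP; rewrite mulf_eq0 conjC_eq0 orbb => /eqP.
Qed.

Section Lin.
Variable T : H -> H.
Hypothesis hT : is_linear T.
Lemma lin0 : T 0 = 0.
Proof.
have := hT 1 0 0; rewrite scaler0 addr0 scale1r.
by rewrite -{1}[T 0]addr0 => /addrI <-.
Qed.
Lemma linD x y : T (x + y) = T x + T y.
Proof. by have := hT 1 x y; rewrite !scale1r. Qed.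
Lemma linZ a x : T (a *: x) = a *: T x.
Proof. by have := hT a x 0; rewrite !addr0 lin0 addr0. Qed.
Lemma linN x : T (- x) = - T x.
Proof. by rewrite -scaleN1r linZ scaleN1r. Qed.
Lemma linB x y : T (x - y) = T x - T y.
Proof. by rewrite linD linN. Qed.
Lemma lin_sum (s : seq (C * H)) :
  T (\sum_(p <- s) p.1 *: p.2) = \sum_(p <- s) p.1 *: T p.2.
Proof.
elim: s => [|p s IH]; first by rewrite !big_nil lin0.
by rewrite !big_cons linD linZ IH.
Qed.
End Lin.

Lemma lin_iter (T : H -> H) n : is_linear T -> is_linear (iter n T).
Proof.
move=> hT; elim: n => [|n IH] a x y //=.
by rewrite IH hT.
Qed.

Lemma tri2 u v (e : C) : 0 < e -> nsq u < e / 4%:R -> nsq v < e / 4%:R -> nsq (u + v) < e.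
Proof.
move=> e0 hu hv; apply: (le_lt_trans (nsqD_le u v)).
have -> : e = e / 4%:R *+ 2 + e / 4%:R *+ 2 by field.
by rewrite ltrD // ltrMn2r.
Qed.

Local Notation CS := (in_closed_span ip).

Lemma CS_approx F x :
  (forall e, 0 < e -> exists w, CS F w /\ nsq (x - w) < e) -> CS F x.
Proof.
move=> h e e0.
have e4 : 0 < e / 4%:R by rewrite divr_gt0 // ltr0n.
have [w [hw1 hw2]] := h _ e4.
have [s [hs1 hs2]] := hw1 _ e4.
exists s; split => //.
have -> : x - \sum_(p <- s) p.1 *: p.2 = (x - w) + (w - \sum_(p <- s) p.1 *: p.2).
  by rewrite addrA subrK.
exact: tri2.
Qed.

Lemma CS_sub (F : H -> Prop) x : F x -> CS F x.
Proof.
move=> Fx e e0; exists [:: (1, x)]; split.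
  by move=> p; rewrite inE => /eqP ->.
by rewrite big_cons big_nil addr0 scale1r subrr nsq0.
Qed.

Lemma CS0 F : CS F 0.
Proof. by move=> e e0; exists [::]; split => //; rewrite big_nil subrr nsq0. Qed.

Lemma CS_lin F a x y : CS F x -> CS F y -> CS F (a *: x + y).
Proof.
move=> hx hy e e0.
set K := a * a^*.
have K0 : 0 <= K := mul_conjC_ge0 a.
have e4 : 0 < e / 4%:R by rewrite divr_gt0 // ltr0n.
have e4K : 0 < e / 4%:R / (K + 1) by rewrite divr_gt0 // ltr_wpDl.
have [s [hs1 hs2]] := hx _ e4K.
have [t [ht1 ht2]] := hy _ e4.
exists ([seq (a * p.1, p.2) | p <- s] ++ t); split.
  move=> p; rewrite mem_cat => /orP[/mapP [q qs ->]|pt] /=; first exact: hs1.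
  exact: ht1.
rewrite big_cat /= big_map /=.
have -> : \sum_(i <- s) (a * i.1) *: i.2 = a *: \sum_(p <- s) p.1 *: p.2.
  rewrite scaler_sumr; apply: eq_bigr => p _; by rewrite scalerA.
have -> : a *: x + y - (a *: \sum_(p <- s) p.1 *: p.2 + \sum_(p <- t) p.1 *: p.2)
   = a *: (x - \sum_(p <- s) p.1 *: p.2) + (y - \sum_(p <- t) p.1 *: p.2).
  by rewrite scalerBr opprD !addrA; congr (_ + _); rewrite addrAC.
apply: tri2 => //.
rewrite nsqZ -/K.
apply: (le_lt_trans (_ : _ <= (K + 1) * nsq (x - \sum_(p <- s) p.1 *: p.2))).
  by rewrite ler_wpM2r ?nsq_ge0 // lerDl.
by rewrite mulrC -ltr_pdivlMr // ltr_wpDl.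
Qed.

Lemma CS_sum F (s : seq (C * H)) :
  (forall p, p \in s -> CS F p.2) -> CS F (\sum_(p <- s) p.1 *: p.2).
Proof.
elim: s => [|p s IH] h; first by rewrite big_nil; apply: CS0.
rewrite big_cons; apply: CS_lin; first by apply: h; rewrite inE eqxx.
by apply: IH => q qs; apply: h; rewrite inE qs orbT.
Qed.

Lemma CS_map (F G : H -> Prop) (T : H -> H) x :
  is_linear T -> (forall z, nsq (T z) <= nsq z) ->
  (forall y, F y -> CS G (T y)) -> CS F x -> CS G (T x).
Proof.
move=> hT hn hFG hx; apply: CS_approx => e e0.
have [s [hs1 hs2]] := hx _ e0.
exists (\sum_(p <- [seq (q.1, T q.2) | q <- s]) p.1 *: p.2); split.
  by apply: CS_sum => p /mapP [q qs ->]; apply/hFG/hs1.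
rewrite big_map /= -(lin_sum hT) -(linB hT).
exact: le_lt_trans (hn _) hs2.
Qed.

Lemma CS_trans (F G : H -> Prop) x :
  (forall y, F y -> CS G y) -> CS F x -> CS G x.
Proof.
move=> h; apply: (@CS_map F G id x) => //.
Qed.

Lemma CS_closed F : closed_set ip (CS F).
Proof.
move=> u x hu hc; apply: CS_approx => e e0.
have [N hN] := hc _ e0.
exists (u N); split => //; rewrite nsq_sym; exact: hN.
Qed.

Lemma CS_closed_subspace F : closed_subspace ip (CS F).
Proof.
split; last exact: CS_closed.
split; first exact: CS0.
by move=> a x y; apply: CS_lin.
Qed.

End Basic.


Section Ops.
Variables (R : realType) (H : lmodType R[i]) (ip : H -> H -> R[i]).
Hypothesis Hip : inner_product ip.
Local Notation C := (R[i]).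
Local Notation nsq := (nsq ip).
Variables (V Vs : H -> H).
Hypothesis HV : isometry_op ip V.
Hypothesis HVs : is_adjoint ip V Vs.

Lemma Vlin : is_linear V. Proof. by case: HV => [[]]. Qed.
Lemma nsqV x : nsq (V x) = nsq x. Proof. by case: HV => _ ->. Qed.
Lemma adjV x y : ip (V x) y = ip x (Vs y). Proof. exact: HVs. Qed.

Lemma ipV x y : ip (V x) (V y) = ip x y.
Proof.
apply/eqP; rewrite -subr_eq0; apply/eqP.
have P := @polar _ _ (fun x y => ip (V x) (V y) - ip x y).
apply: P => [a u v z|a u v z|z] /=.
- rewrite Vlin !(ipDZl Hip); ring.
- rewrite Vlin !(ipDr Hip) !(ipZr Hip); ring.
- by have := nsqV z; rewrite /Defs.nsq => ->; rewrite subrr.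
Qed.

Lemma VsV x : Vs (V x) = x.
Proof. apply: (ip_extr Hip) => z; by rewrite -adjV ipV. Qed.

Lemma Vslin : is_linear Vs.
Proof.
move=> a u v; apply: (ip_extr Hip) => z.
by rewrite -adjV (ipDr Hip) (ipZr Hip) !adjV -(ipZr Hip) -(ipDr Hip).
Qed.

Lemma pyth z : nsq z = nsq (Vs z) + nsq (z - V (Vs z)).
Proof.
have e : z = V (Vs z) + (z - V (Vs z)) by rewrite addrC subrK.
have h0 : ip (V (Vs z)) (z - V (Vs z)) = 0.
  by rewrite adjV (linB Vslin) VsV subrr (ip0r Hip).
rewrite {1}e (nsqD Hip) h0 (ipC Hip) h0 conjC0 !addr0.
by rewrite nsqV.
Qed.

Lemma Vs_contr z : nsq (Vs z) <= nsq z.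
Proof. by rewrite [X in _ <= X]pyth lerDl (nsq_ge0 Hip). Qed.

Lemma PL_contr z : nsq (z - V (Vs z)) <= nsq z.
Proof. by rewrite [X in _ <= X]pyth lerDr (nsq_ge0 Hip). Qed.

Lemma ipVn n x y : ip (iter n V x) (iter n V y) = ip x y.
Proof. by elim: n => //= n IH; rewrite ipV. Qed.

Lemma nsqVn n x : nsq (iter n V x) = nsq x.
Proof. exact: ipVn. Qed.

Lemma adjVn n x y : ip (iter n V x) y = ip x (iter n Vs y).
Proof. by elim: n y => //= n IH y; rewrite adjV IH -iterSr. Qed.

Lemma VsnVn n x : iter n Vs (iter n V x) = x.
Proof.
elim: n x => // n IH x.
by rewrite iterSr iterS VsV IH.
Qed.

Lemma Vsn_contr n z : nsq (iter n Vs z) <= nsq z.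
Proof.
elim: n => //= n IH; exact: le_trans (Vs_contr _) IH.
Qed.

Lemma Vs_eig w (s : C) : Vs w = s *: w -> s * s^* = 1 -> V w = s^* *: w.
Proof.
move=> hw hs; apply/eqP; rewrite -subr_eq0; apply/eqP/(nsq_eq0 Hip).
rewrite (nsqB Hip) nsqV (nsqZ Hip) (ipZr Hip) adjV hw (ipZr Hip) conjCK.
rewrite (ipZl Hip) (ipC Hip (V w)) adjV hw (ipZr Hip) cjM conjCK.
rewrite -/(Defs.nsq ip w) (nsq_conj Hip).
have E : forall m : C, m + s^* * s * m - (s * (s^* * m) + s^* * (s * m)) = m * (1 - s * s^*).
  by move=> m; ring.
by rewrite E hs subrr mulr0.
Qed.

Lemma V_eig_Vs y (s : C) : V y = s *: y -> s * s^* = 1 -> Vs y = s^* *: y.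
Proof.
move=> hy hs.
have e : y = s^* *: V y by rewrite hy scalerA mulrC hs scale1r.
by rewrite {1}e (linZ Vslin) VsV.
Qed.

Lemma Vsn_eig n y (s : C) : V y = s *: y -> s * s^* = 1 -> iter n Vs y = (s^* ^+ n) *: y.
Proof.
move=> hy hs; elim: n => [|n IH] /=; first by rewrite scale1r.
by rewrite IH (linZ Vslin) (V_eig_Vs hy hs) scalerA exprS mulrC.
Qed.

End Ops.


Section AOps.
Variables (R : realType) (H : lmodType R[i]) (ip : H -> H -> R[i]).
Hypothesis Hip : inner_product ip.
Local Notation C := (R[i]).
Local Notation nsq := (nsq ip).
Variables (V Vs A : H -> H).
Hypothesis HV : isometry_op ip V.
Hypothesis HVs : is_adjoint ip V Vs.
Hypothesis HA : bounded_op ip A.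
Hypothesis HApos : positive_op ip A.
Hypothesis Hhankel : forall x, Vs (A x) = A (V x).

Lemma Alin : is_linear A. Proof. by case: HA. Qed.
Lemma Apos u : 0 <= ip (A u) u. Proof. by case: HApos. Qed.
Lemma Ainj : injective A. Proof. by case: HApos. Qed.

Lemma Asa x y : ip (A x) y = ip x (A y).
Proof.
apply/eqP; rewrite -subr_eq0; apply/eqP.
have P := @polar _ _ (fun x y => ip (A x) y - ip x (A y)).
apply: P => [a u v z|a u v z|z] /=.
- rewrite Alin !(ipDZl Hip); ring.
- rewrite Alin !(ipDr Hip) !(ipZr Hip); ring.
- by rewrite (ipC Hip (A z) z) (geC0_conj (Apos z)) subrr.
Qed.

Lemma Abound : exists K : C, 0 <= K /\ forall x, nsq (A x) <= K * nsq x.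
Proof.
case: HA => _ [M hM]; exists `|M|; split => // x.
have [x0|nx] := eqVneq (nsq x) 0.
  by move/(nsq_eq0 Hip): x0 => ->; rewrite (lin0 Alin) (nsq0 Hip) mulr0.
have xp : 0 < nsq x by rewrite lt_def nx (nsq_ge0 Hip).
have M0 : 0 <= M.
  by rewrite -(pmulr_lge0 _ xp); apply: le_trans (nsq_ge0 Hip _) (hM x).
by rewrite ger0_norm.
Qed.

Lemma cbound : exists K : C, 0 <= K /\ forall u, ip (A u) u *+ 2 <= K * nsq u.
Proof.
have [K [K0 hK]] := Abound.
exists (K + 1); split; first by rewrite addr_ge0.
move=> u.
have := nsq_ge0 Hip (A u - u); rewrite (nsqB Hip) subr_ge0.
rewrite (ipC Hip (A u) u) (geC0_conj (Apos u)) -mulr2n => h.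
apply: le_trans h _.
by rewrite mulrDl mul1r lerD2r hK.
Qed.

Lemma Azero z : ip (A z) z = 0 -> A z = 0.
Proof.
move=> hz; set w := A z.
set N := nsq w; set cw := ip (A w) w.
have cw0 : 0 <= cw := Apos w.
have hN : ip (A z) w = N by [].
have hN2 : ip (A w) z = N by rewrite Asa.
have key : forall t : C, t^* = t ->
    ip (A (z - t *: w)) (z - t *: w) = t * (t * cw - N *+ 2).
  move=> t ht.
  rewrite (linB Alin) (linZ Alin) (ipBl Hip) !(ipBr Hip) (ipZl Hip) !(ipZr Hip).
  rewrite hz hN hN2 -/cw ht (ipZl Hip) -/cw; ring.
apply: (nsq_eq0 Hip); apply: small0; first exact: nsq_ge0.
move=> e e0.
have t0 : 0 < e / (cw + 1) by rewrite divr_gt0 // ltr_wpDl.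
have := Apos (z - (e / (cw + 1)) *: w).
rewrite key; last by rewrite geC0_conj // ltW.
rewrite pmulr_rge0 // subr_ge0 => h.
apply: (le_lt_trans (_ : N <= N *+ 2)).
  by rewrite mulr2n lerDl nsq_ge0.
apply: le_lt_trans h _.
rewrite mulrAC ltr_pdivrMr ?ltr_wpDl //.
by rewrite ltr_pM2l // ltrDl.
Qed.

Lemma cdelta u :
  ip (A (V (V u) - u)) (V (V u) - u) =
  ip (A (V (V u))) (V (V u)) - ip (A (V u)) (V u) *+ 2 + ip (A u) u.
Proof.
have h1 : ip (A (V u)) (V u) = ip (A u) (V (V u)).
  by rewrite -Hhankel (ipC Hip) -(adjV HVs) -(ipC Hip).
have h2 : ip (A (V (V u))) u = ip (A u) (V (V u)).
  by rewrite -Hhankel -Hhankel (ipC Hip) -!(adjV HVs) -(ipC Hip).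
rewrite (linB Alin) (ipBl Hip) !(ipBr Hip) h1 h2; ring.
Qed.

Lemma Ainv_p x : V x = x -> V (A x) = A x.
Proof.
move=> hx.
have e : Vs (A x) = 1 *: A x by rewrite Hhankel hx scale1r.
by have := Vs_eig Hip HV HVs e; rewrite conjC1 mulr1 scale1r; apply.
Qed.

Lemma Ainv_m x : V x = - x -> V (A x) = - A x.
Proof.
move=> hx.
have e : Vs (A x) = (-1) *: A x by rewrite Hhankel hx (linN Alin) scaleN1r.
have := Vs_eig Hip HV HVs e; rewrite conjCN1 mulrNN mulr1 scaleN1r; apply => //.
Qed.

End AOps.


Section GS.
Variables (R : realType) (H : lmodType R[i]) (ip : H -> H -> R[i]).
Hypothesis Hip : inner_product ip.
Local Notation C := (R[i]).
Local Notation nsq := (nsq ip).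
Variable g : nat -> H.

Definition gs_step (fs : seq H) (v : H) : H :=
  let r := v - \sum_(f <- fs) ip v f *: f in
  if r == 0 then 0 else (sqrtC (nsq r))^-1 *: r.

Fixpoint gs n := if n is m.+1 then rcons (gs m) (gs_step (gs m) (g m)) else [::].
Definition gsf_def n := gs_step (gs n) (g n).
Fact gsf_key : unit. Proof. by []. Qed.
Definition gsf := locked_with gsf_key gsf_def.

Lemma gsE n : gs n = mkseq gsf n.
Proof.
have -> : gsf = gsf_def by rewrite /gsf unlock.
by elim: n => // n IH; rewrite mkseqS -IH.
Qed.

Definition gsr n := g n - \sum_(k <- iota 0 n) ip (g n) (gsf k) *: gsf k.

Lemma gsfE n : gsf n = if gsr n == 0 then 0 else (sqrtC (nsq (gsr n)))^-1 *: gsr n.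
Proof.
have -> : gsf n = gs_step (gs n) (g n) by rewrite /gsf unlock.
by rewrite /gs_step /gsr gsE /mkseq big_map.
Qed.

Lemma ip_suml_nat (s : seq nat) (c : nat -> C) (v : nat -> H) z :
  ip (\sum_(k <- s) c k *: v k) z = \sum_(k <- s) c k * ip (v k) z.
Proof.
elim: s => [|k s IH]; first by rewrite !big_nil (ip0l Hip).
by rewrite !big_cons (ipDl Hip) (ipZl Hip) IH.
Qed.

Lemma lin_sum_nat (T : H -> H) (s : seq nat) (c : nat -> C) (v : nat -> H) :
  is_linear T -> T (\sum_(k <- s) c k *: v k) = \sum_(k <- s) c k *: T (v k).
Proof.
move=> hT; elim: s => [|k s IH]; first by rewrite !big_nil (lin0 hT).
by rewrite !big_cons (linD hT) (linZ hT) IH.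
Qed.

Definition ONrel i j : C := if i == j then (if gsf i == 0 then 0 else 1) else 0.

Lemma gs_orth n : forall i j, (i < n)%N -> (j < n)%N -> ip (gsf i) (gsf j) = ONrel i j.
Proof.
elim: n => [//|n IH].
have key : forall j, (j < n)%N -> ip (gsf n) (gsf j) = 0.
  move=> j jn.
  have hr : ip (gsr n) (gsf j) = 0.
    rewrite /gsr (ipBl Hip) ip_suml_nat.
    rewrite (bigD1_seq j) ?mem_iota ?iota_uniq //=.
    rewrite big1_seq; last first.
      move=> k /andP [kj kin]; rewrite IH //; last by move: kin; rewrite mem_iota.
      by rewrite /ONrel (negPf kj) mulr0.
    rewrite addr0 IH // /ONrel eqxx.
    case: eqP => [->|_]; first by rewrite (ip0r Hip) mulr0 subrr.
    by rewrite mulr1 subrr.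
  rewrite gsfE; case: eqP => _; first by rewrite (ip0l Hip).
  by rewrite (ipZl Hip) hr mulr0.
move=> i j; rewrite !ltnS => iS jS.
have [->|ine] := eqVneq i n; have [->|jne] := eqVneq j n.
all: try have il : (i < n)%N by rewrite ltn_neqAle ine iS.
all: try have jl : (j < n)%N by rewrite ltn_neqAle jne jS.
- rewrite /ONrel eqxx; case: eqP => [->|nz]; first by rewrite (ip0l Hip).
  move: nz; rewrite gsfE; case: eqP => // rn0 _.
  set r := gsr n.
  have r0 : 0 < nsq r.
    rewrite lt_def (nsq_ge0 Hip) andbT; apply/eqP => /(nsq_eq0 Hip); exact: rn0.
  have s0 : 0 < sqrtC (nsq r) by rewrite lt_def sqrtC_ge0 sqrtC_eq0 (ltW r0) gt_eqF.
  rewrite -/(Defs.nsq ip _) (nsqZ Hip) cjV (geC0_conj (ltW s0)) -expr2 exprVn sqrtCK.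
  by rewrite mulVf // gt_eqF.
- by rewrite key // /ONrel eq_sym (ltn_eqF jl).
- rewrite (ipC Hip) key // conjC0 /ONrel (ltn_eqF il) //.
- exact: IH.
Qed.

Lemma gsf_norm i : gsf i != 0 -> ip (gsf i) (gsf i) = 1.
Proof. by move=> h; rewrite (@gs_orth i.+1) // /ONrel eqxx (negPf h). Qed.

Lemma gsf_orth i j : i != j -> ip (gsf i) (gsf j) = 0.
Proof.
move=> h; rewrite (@gs_orth (maxn i j).+1) ?ltnS ?leq_maxl ?leq_maxr //.
by rewrite /ONrel (negPf h).
Qed.

Lemma gsf_ker (T : H -> H) : is_linear T -> (forall n, T (g n) = 0) -> forall n, T (gsf n) = 0.
Proof.
move=> hT hg; elim/ltn_ind => n IH.
rewrite gsfE; case: eqP => _; first exact: lin0 hT.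
rewrite (linZ hT) /gsr (linB hT) (lin_sum_nat _ _ _ hT) hg.
have -> : \sum_(k <- iota 0 n) ip (g n) (gsf k) *: T (gsf k) = 0.
  apply: big1_seq => k /andP [_]; rewrite mem_iota add0n => kn.
  by rewrite IH ?scaler0.
by rewrite subr0 scaler0.
Qed.

Lemma g_repr n :
  g n = sqrtC (nsq (gsr n)) *: gsf n + \sum_(k <- iota 0 n) ip (g n) (gsf k) *: gsf k.
Proof.
rewrite gsfE; case: eqP => [r0|rn0].
  by rewrite scaler0 add0r -[LHS](subrK (\sum_(k <- iota 0 n) ip (g n) (gsf k) *: gsf k)) -/(gsr n) r0 add0r.
rewrite scalerA mulfV; last by rewrite sqrtC_eq0; apply/eqP => /(nsq_eq0 Hip).
by rewrite scale1r /gsr subrK.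
Qed.

Lemma g_in_span n : in_closed_span ip (fun y => exists i, y = gsf i) (g n).
Proof.
rewrite g_repr.
have -> : \sum_(k <- iota 0 n) ip (g n) (gsf k) *: gsf k =
   \sum_(p <- [seq (ip (g n) (gsf k), gsf k) | k <- iota 0 n]) p.1 *: p.2.
  by rewrite big_map.
apply: (CS_lin Hip); first by apply: (CS_sub Hip); exists n.
apply: (CS_sum Hip) => p /mapP [k _ ->]; apply: (CS_sub Hip); by exists k.
Qed.

Lemma g_in_span' n : in_closed_span ip (fun y => exists i, gsf i != 0 /\ y = gsf i) (g n).
Proof.
apply: (CS_trans Hip) (g_in_span n) => y [i ->].
have [z|nz] := eqVneq (gsf i) 0; first by rewrite z; apply: CS0.
by apply: (CS_sub Hip); exists i.
Qed.

End GS.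


Section Convex.
Variable F : numFieldType.

Lemma sum_lb (f d : nat -> F) m j a :
  (forall k, f k.+1 - f k = d k) -> (forall i, (i < j)%N -> a <= d (m + i)%N) ->
  j%:R * a <= f (m + j)%N - f m.
Proof.
move=> hd; elim: j => [|j IH] h; first by rewrite addn0 subrr mulr0n mul0r.
have e : f (m + j.+1)%N - f m = (f (m + j)%N - f m) + d (m + j)%N.
  by rewrite -hd addnS; ring.
rewrite e -nat1r mulrDl mul1r addrC; apply: lerD; last by apply: h.
by apply: IH => i ij; apply: h; rewrite ltnS ltnW.
Qed.

Lemma sum_ub (f d : nat -> F) m j a :
  (forall k, f k.+1 - f k = d k) -> (forall i, (i < j)%N -> d (m + i)%N <= a) ->
  f (m + j)%N - f m <= j%:R * a.
Proof.
move=> hd; elim: j => [|j IH] h; first by rewrite addn0 subrr mulr0n mul0r.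
have e : f (m + j.+1)%N - f m = (f (m + j)%N - f m) + d (m + j)%N.
  by rewrite -hd addnS; ring.
rewrite e -nat1r mulrDl mul1r addrC; apply: lerD; first by apply: h.
by apply: IH => i ij; apply: h; rewrite ltnS ltnW.
Qed.

Lemma convex_bound (f : nat -> F) (B2 : F) N :
  (forall k, 0 <= f k) -> (forall k, f k *+ 2 <= B2) ->
  (forall k, 0 <= f k.+2 - f k.+1 *+ 2 + f k) ->
  (N.+1)%:R * (f N.+2 - f N.+1 *+ 2 + f N) <= B2.
Proof.
move=> f0 fB fc.
pose d k := (f k.+1 - f k) *+ 2.
pose g k := f k *+ 2.
have hd : forall k, g k.+1 - g k = d k by move=> k; rewrite /g /d mulrnBl.
have dinc : forall k, d k <= d k.+1.
  by move=> k; rewrite -subr_ge0 /d -mulrnBl pmulrn_lge0 //; move: (fc k); congr (_ <= _); ring.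
have dmono : forall k m, (k <= m)%N -> d k <= d m.
  move=> k m /subnKC <-; elim: (m - k)%N => [|j IH]; first by rewrite addn0.
  by rewrite addnS; apply: le_trans IH (dinc _).
set delta := f N.+2 - f N.+1 *+ 2 + f N.
have de : d N.+1 = d N + delta *+ 2 by rewrite /d /delta; ring.
have rf : forall k, f k \is Num.real by move=> k; apply: ger0_real.
have rd : d N + delta \is Num.real.
  have -> : d N + delta = f N.+2 - f N by rewrite /delta /d; ring.
  exact: rpredB.
have := real_leVge (@real0 F) rd; case/orP => hc.
-
  have hA : forall i, (i < N.+1)%N -> delta <= d (N.+1 + i)%N.
    move=> i _; apply: le_trans (dmono _ _ (leq_addr i N.+1)).
    rewrite de -subr_ge0; move: hc; congr (_ <= _); rewrite /d; ring.
  have := sum_lb hd hA => h1; apply: le_trans h1 _.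
  rewrite /g lerBlDr; apply: le_trans (fB _) _; rewrite lerDl; exact: mulrn_wge0.
-
  have hB : forall i, (i < N.+1)%N -> d (0 + i)%N <= - delta.
    move=> i iN; apply: le_trans (dmono _ _ _) _; first by rewrite add0n -ltnS; exact: iN.
    by rewrite -subr_ge0; move: hc; rewrite -oppr_ge0; congr (_ <= _); rewrite /d; ring.
  have := sum_ub hd hB => h1.
  rewrite mulrN in h1; move: h1; rewrite -lerN2 opprK => h1; apply: le_trans h1 _.
  rewrite add0n opprB /g lerBlDr; apply: le_trans (fB _) _; rewrite lerDl; exact: mulrn_wge0.
Qed.
End Convex.

Section Transfer.
Variable R : realType.
Local Notation C := (R[i]).
Local Open Scope complex_scope.

Lemma toRK (z : C) : (0 <= z)%R -> (complex.Re z)%:C = z.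
Proof. by move=> h; apply: RRe_real; apply: ger0_real. Qed.

Lemma cRB (a b : R) : (a - b)%R%:C = (a%:C - b%:C)%R.
Proof. exact: rmorphB. Qed.
Lemma cRM (a b : R) : (a * b)%R%:C = (a%:C * b%:C)%R.
Proof. exact: rmorphM. Qed.
Lemma cRn (n : nat) : (n%:R : R)%:C = (n%:R : C).
Proof. exact: rmorph_nat. Qed.

Lemma arch0 (z B : C) : (0 <= z)%R -> (forall N, ((N.+1)%:R * z <= B)%R) -> z = 0.
Proof.
move=> z0 h.
have B0 : (0 <= B)%R by apply: le_trans (h 0%N); rewrite mulr_ge0.
rewrite -(toRK z0) -(toRK B0) in h *.
set zr := complex.Re z in h *; set br := complex.Re B in h *.
have zr0 : (0 <= zr)%R by rewrite -ler0c toRK.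
have br0 : (0 <= br)%R by rewrite -ler0c toRK.
have [->//|nz] := eqVneq zr 0%R.
have zp : (0 < zr)%R by rewrite lt_def nz zr0.
have h1 := archi_boundP (divr_ge0 br0 zr0).
rewrite ltr_pdivrMr // in h1.
set N := Num.Def.archi_bound _ in h1.
have h2 := h N; rewrite -cRn -cRM lecR in h2.
have : (br < br)%R.
  apply: lt_le_trans h1 _; apply: le_trans h2.
  by rewrite ler_wpM2r // ler_nat.
by rewrite ltxx.
Qed.
End Transfer.

Section QSec.
Variables (R : realType) (H : lmodType R[i]) (ip : H -> H -> R[i]).
Hypothesis Hip : inner_product ip.
Local Notation C := (R[i]).
Local Notation nsq := (nsq ip).
Variables (V Vs A : H -> H).
Hypothesis HV : isometry_op ip V.
Hypothesis HVs : is_adjoint ip V Vs.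
Hypothesis HA : bounded_op ip A.
Hypothesis HApos : positive_op ip A.
Hypothesis Hhankel : forall x, Vs (A x) = A (V x).
Hypothesis Hcomp : complete_space ip.

Definition Qop n x := iter n V (iter n Vs x).

Lemma QQ_le m n x : (m <= n)%N -> Qop m (Qop n x) = Qop n x.
Proof.
move=> h; rewrite /Qop -(subnKC h) !iterD.
by rewrite (VsnVn Hip HV HVs).
Qed.

Lemma QQ_ge m n x : (m <= n)%N -> Qop n (Qop m x) = Qop n x.
Proof.
move=> h; rewrite /Qop -(subnK h) !iterD.
by rewrite (VsnVn Hip HV HVs).
Qed.

Lemma Qlin n : is_linear (Qop n).
Proof.
move=> a x y; rewrite /Qop.
by rewrite (lin_iter n (Vslin Hip HVs)) (lin_iter n (Vlin HV)).
Qed.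

Lemma Q_contr n z : nsq (Qop n z) <= nsq z.
Proof. by rewrite /Qop (nsqVn Hip HV) (Vsn_contr Hip HV HVs). Qed.

Lemma Q_adj m u v : ip u (Qop m v) = ip (Qop m u) v.
Proof.
rewrite /Qop (ipC Hip) !(adjVn HVs).
by rewrite -(ipC Hip).
Qed.

Lemma Q_diff n m x : (n <= m)%N ->
  nsq (Qop n x - Qop m x) = nsq (Qop n x) - nsq (Qop m x).
Proof.
move=> h.
have e1 : ip (Qop n x) (Qop m x) = nsq (Qop m x).
  rewrite Q_adj QQ_ge // /Defs.nsq Q_adj QQ_le //.
rewrite (nsqB Hip) (ipC Hip (Qop n x) (Qop m x)) e1 (nsq_conj Hip); ring.
Qed.

Lemma Q_dec n m x : (n <= m)%N -> nsq (Qop m x) <= nsq (Qop n x).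
Proof. by move=> h; rewrite -subr_ge0 -Q_diff //; apply: nsq_ge0. Qed.


Lemma Q_cauchy x : cauchy_seq ip (fun n => Qop n x).
Proof.
move=> e e0.
pose a n := complex.Re (nsq (Qop n x)).
have aK n : ((a n)%:C)%C = nsq (Qop n x) by apply: toRK; apply: nsq_ge0.
have a0 n : 0 <= a n by rewrite -ler0c aK nsq_ge0.
have amono n m : (n <= m)%N -> a m <= a n.
  by move=> h; rewrite -lecR !aK; apply: Q_dec.
pose S := [set a n | n in [set: nat]]%classic.
have hinf : has_inf S.
  split; first by exists (a 0%N); exists 0%N.
  by exists 0 => v [n _ <-]; apply: a0.
pose er := complex.Re e.
have eK : (er%:C)%C = e by apply: toRK; apply: ltW.
have er0 : 0 < er by rewrite -ltcR eK.
have [v [N _ <-] hv] := inf_adherent er0 hinf.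
exists N.
suff W : forall m n, (N <= m)%N -> (N <= n)%N -> (m <= n)%N -> nsq (Qop m x - Qop n x) < e.
  move=> m n hm hn; case: (leqP m n) => h; first exact: W.
  by rewrite (nsq_sym Hip); apply: W => //; apply: ltnW.
move=> m n hm hn hmn.
rewrite Q_diff // -!aK -cRB -eK ltcR.
have h1 := amono _ _ hm.
have h2 : inf S <= a n by apply: ge_inf; [case: hinf|exists n].
lra.
Qed.

Lemma Q_fix x y : converges ip (fun n => Qop n x) y -> forall m, Qop m y = y.
Proof.
move=> hc m; apply/eqP; rewrite -subr_eq0; apply/eqP/(nsq_eq0 Hip)/small0.
  exact: nsq_ge0.
move=> e e0.
have e4 : 0 < e / 4%:R by rewrite divr_gt0 // ltr0n.
have [N hN] := hc _ e4.
set n := maxn m N.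
have -> : Qop m y - y = Qop m (y - Qop n x) + (Qop n x - y).
  by rewrite (linB (Qlin m)) QQ_le ?leq_maxl // addrA subrK.
apply: (tri2 Hip) => //; last by apply: hN; rewrite leq_maxr.
apply: le_lt_trans (Q_contr _ _) _.
by rewrite (nsq_sym Hip); apply: hN; rewrite leq_maxr.
Qed.

Lemma core y : (forall m, Qop m y = y) -> V (V y) = y.
Proof.
move=> hy.
have [K [K0 hK]] := cbound Hip HA HApos.
pose c u := ip (A u) u.
have hd : c (V (V y) - y) = 0.
  apply: (arch0 (B := K * nsq y)); first exact: (Apos HApos).
  move=> N.
  pose w := iter N Vs y.
  pose f k := c (iter k V w).
  have hw : iter N V w = y by apply: hy.
  have := @convex_bound _ f (K * nsq y) N.
  have -> : f N.+2 - f N.+1 *+ 2 + f N = c (V (V y) - y).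
    by rewrite /f /c /= hw (cdelta Hip HVs HA Hhankel).
  apply.
  - by move=> k; apply: (Apos HApos).
  - move=> k; apply: le_trans (hK _) _.
    rewrite ler_wpM2l // (nsqVn Hip HV).
    exact: (Vsn_contr Hip HV HVs).
  - move=> k; rewrite /f /c /= -(cdelta Hip HVs HA Hhankel).
    exact: (Apos HApos).
have := Azero Hip HA HApos hd.
rewrite -(lin0 (Alin HA)) => /(Ainj HApos) /eqP.
by rewrite subr_eq0 => /eqP.
Qed.

End QSec.


Section Main.
Variables (R : realType) (H : lmodType R[i]) (ip : H -> H -> R[i]).
Hypothesis Hip : inner_product ip.
Local Notation C := (R[i]).
Local Notation nsq := (nsq ip).
Local Notation CS := (in_closed_span ip).
Variables (V Vs A : H -> H).
Hypothesis HV : isometry_op ip V.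
Hypothesis HVs : is_adjoint ip V Vs.
Hypothesis HA : bounded_op ip A.
Hypothesis HApos : positive_op ip A.
Hypothesis Hhankel : forall x, Vs (A x) = A (V x).
Hypothesis Hcomp : complete_space ip.
Variable d : nat -> H.
Hypothesis hd : forall (x : H) (e : C), 0 < e -> exists k, nsq (x - d k) < e.

Definition gg k := d k - V (Vs (d k)).
Definition ff := gsf ip gg.
Definition PP i := ff i != 0.
Definition ee k i := iter k V (ff i).
Definition EE := fun y => exists k i, PP i /\ y = ee k i.
Definition FF := fun y => exists i, ff i != 0 /\ y = ff i.

Lemma PLker u : Vs (u - V (Vs u)) = 0.
Proof. by rewrite (linB (Vslin Hip HVs)) (VsV Hip HV HVs) subrr. Qed.

Lemma ff_ker i : Vs (ff i) = 0.
Proof. apply: (gsf_ker ip (Vslin Hip HVs)) => n; exact: PLker. Qed.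

Lemma L_span l : Vs l = 0 -> CS FF l.
Proof.
move=> hl; apply: (CS_approx Hip) => e e0.
have [k hk] := hd l e0.
exists (gg k); split; first exact: (g_in_span' Hip).
have -> : l - gg k = (l - d k) - V (Vs (l - d k)).
  rewrite /gg (linB (Vslin Hip HVs)) hl sub0r (linN (Vlin HV)).
  by rewrite opprK opprB addrA addrAC addrC addrA [_ + l]addrC.
exact: le_lt_trans (PL_contr Hip HV HVs _) hk.
Qed.

Lemma Vk_span k x : CS FF x -> CS EE (iter k V x).
Proof.
apply: (CS_map Hip).
- exact: lin_iter (Vlin HV).
- by move=> z; rewrite (nsqVn Hip HV).
- move=> y [i [hi ->]]; apply: (CS_sub Hip); by exists k, i.
Qed.

Lemma partial_in x n : CS EE (x - Qop V Vs n x).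
Proof.
elim: n => [|n IH]; first by rewrite /Qop /= subrr; apply: CS0.
set u := iter n Vs x.
have -> : x - Qop V Vs n.+1 x = 1 *: (x - Qop V Vs n x) + iter n V (u - V (Vs u)).
  rewrite scale1r (linB (lin_iter n (Vlin HV))) /Qop -/u.
  rewrite iterSr iterS -/u; rewrite addrA subrK //.
apply: (CS_lin Hip) => //.
by apply: Vk_span; apply: L_span; apply: PLker.
Qed.

Lemma decomp x : exists x0 xp xm,
  [/\ CS EE x0, V xp = xp, V xm = - xm & x = x0 + xp + xm].
Proof.
have [y hy] := Hcomp (Q_cauchy Hip HV HVs x).
have fy := Q_fix Hip HV HVs hy.
have vvy := core Hip HV HVs HA HApos Hhankel fy.
exists (x - y), (2^-1 *: (y + V y)), (2^-1 *: (y - V y)); split.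
- apply: (CS_approx Hip) => e e0.
  have [N hN] := hy _ e0.
  exists (x - Qop V Vs N x); split; first exact: partial_in.
  have -> : x - y - (x - Qop V Vs N x) = Qop V Vs N x - y.
    by rewrite opprB addrC addrA subrK.
  exact: hN.
- by rewrite (linZ (Vlin HV)) (linD (Vlin HV)) vvy addrC.
- by rewrite (linZ (Vlin HV)) (linB (Vlin HV)) vvy -scalerN opprB.
- rewrite -addrA -scalerDr.
  have -> : (y + V y) + (y - V y) = 2%:R *: y.
    by rewrite scaler_nat mulr2n addrACA subrr addr0.
  by rewrite scalerA mulVf ?pnatr_eq0 // scale1r subrK.
Qed.


Lemma ker_closed (T : H -> H) (K : C) : is_linear T -> 0 <= K ->
  (forall z, nsq (T z) <= K * nsq z) -> closed_set ip (fun x => T x = 0).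
Proof.
move=> hT K0 hK u x hu hc; apply: (nsq_eq0 Hip); apply: small0; first exact: nsq_ge0.
move=> e e0.
have e1 : 0 < e / (K + 1) by rewrite divr_gt0 // ltr_wpDl.
have [N hN] := hc _ e1.
have := hN N (leqnn N).
have -> : T x = - T (u N - x) by rewrite (linB hT) hu sub0r opprK.
rewrite (nsqN Hip) => h; apply: le_lt_trans (hK _) _.
apply: (le_lt_trans (_ : _ <= (K + 1) * nsq (u N - x))).
  by rewrite ler_wpM2r ?nsq_ge0 // lerDl.
by rewrite mulrC -ltr_pdivlMr // ltr_wpDl.
Qed.

Lemma eig_closed (s : C) : closed_subspace ip (fun x => V x = s *: x).
Proof.
split.
  split; first by rewrite (lin0 (Vlin HV)) scaler0.
  move=> a x y hx hy; rewrite (Vlin HV) hx hy scalerDr !scalerA mulrC //.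
move=> u x hu hc.
have hT : is_linear (fun z => V z - s *: z).
  move=> a x1 y1; rewrite (Vlin HV) scalerDr opprD addrACA scalerBr !scalerA mulrC //.
have hK : forall z, nsq (V z - s *: z) <= (2%:R + (s * s^*) *+ 2) * nsq z.
  move=> z; apply: le_trans (nsqD_le Hip _ _) _.
  rewrite (nsqV HV) (nsqN Hip) (nsqZ Hip) le_eqVlt; apply/orP; left; apply/eqP; ring.
apply/eqP; rewrite -subr_eq0; apply/eqP.
apply: (@ker_closed _ _ hT _ hK u x _ hc).
- by rewrite addr_ge0 // mulrn_wge0 // mul_conjC_ge0.
- by move=> n; rewrite hu subrr.
Qed.

Lemma orth_eig x y (s : C) : CS EE x -> V y = s *: y -> s * s^* = 1 -> ip x y = 0.
Proof.
move=> hx hy hs.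
have he : forall k i, ip (ee k i) y = 0.
  move=> k i; rewrite /ee (adjVn HVs) (Vsn_eig Hip HV HVs k hy hs) (ipZr Hip).
  suff -> : ip (ff i) y = 0 by rewrite mulr0.
  have -> : y = s^* *: V y by rewrite hy scalerA [s^* * s]mulrC hs scale1r.
  by rewrite (ipZr Hip) (ipC Hip) (adjV HVs) ff_ker (ip0r Hip) conjC0 mulr0.
apply: (orth_approx Hip) => e e0.
have [s0 [hs1 hs2]] := hx _ e0.
exists (\sum_(p <- s0) p.1 *: p.2); split => //.
rewrite (ip_suml Hip) big1_seq // => p /andP [_ ps].
by have [k [i [_ ->]]] := hs1 p ps; rewrite he mulr0.
Qed.

Lemma orth_pm x y : V x = x -> V y = - y -> ip x y = 0.
Proof.
move=> hx hy; have := ipV Hip HV x y; rewrite hx hy (ipNr Hip) => /eqP.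
by rewrite -subr_eq0 -opprD oppr_eq0 -mulr2n mulrn_eq0 /= => /eqP.
Qed.

Lemma ortho_kl k l i j : (k < l)%N -> ip (ee k i) (ee l j) = 0.
Proof.
move=> kl; rewrite /ee -(subnKC kl) iterD iterSr (adjVn HVs) (VsnVn Hip HV HVs).
by rewrite (ipC Hip) (adjV HVs) ff_ker (ip0r Hip) conjC0.
Qed.

Lemma pure : pure_isometry_on ip V (CS EE).
Proof.
exists PP, ee; split => //.
move=> k i l j hi hj.
case: (ltngtP k l) => [kl|lk|->].
- by rewrite ortho_kl.
- by rewrite (ipC Hip) ortho_kl // conjC0.
- rewrite /= /ee (ipVn Hip HV).
  by case: eqVneq => [->|ij]; [exact: gsf_norm | exact: gsf_orth].
Qed.

Lemma eig1 : (1 : C) * 1^* = 1. Proof. by rewrite conjC1 mulr1. Qed.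
Lemma eigN1 : (-1 : C) * (-1)^* = 1. Proof. by rewrite conjCN1 mulrNN mulr1. Qed.

Lemma A_H0 x : CS EE x -> CS EE (A x).
Proof.
move=> hx.
have [a0 [ap [am [h0 hp hm e]]]] := decomp (A x).
have hp1 : V ap = 1 *: ap by rewrite scale1r.
have hm1 : V am = (-1) *: am by rewrite scaleN1r.
have Ap1 : V (A ap) = 1 *: A ap by rewrite scale1r (Ainv_p Hip HV HVs Hhankel hp).
have Am1 : V (A am) = (-1) *: A am by rewrite scaleN1r (Ainv_m Hip HV HVs HA Hhankel hm).
have zp : ap = 0.
  apply: (nsq_eq0 Hip).
  have : ip (A x) ap = 0 by rewrite (Asa Hip HA HApos); exact: orth_eig hx Ap1 eig1.
  rewrite e !(ipDl Hip) (orth_eig h0 hp1 eig1) (ipC Hip ap am) (orth_pm hp hm) conjC0.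
  by rewrite add0r addr0.
have zm : am = 0.
  apply: (nsq_eq0 Hip).
  have : ip (A x) am = 0 by rewrite (Asa Hip HA HApos); exact: orth_eig hx Am1 eigN1.
  by rewrite e !(ipDl Hip) (orth_eig h0 hm1 eigN1) (orth_pm hp hm) !add0r.
by rewrite e zp zm !addr0.
Qed.

Lemma main_sec :
  exists H0 Hp Hm : H -> Prop,
    (closed_subspace ip H0 /\ closed_subspace ip Hp /\ closed_subspace ip Hm) /\
    [/\ orthogonal_sets ip H0 Hp /\ orthogonal_sets ip H0 Hm /\ orthogonal_sets ip Hp Hm,
        (forall x, exists x0 xp xm, [/\ H0 x0, Hp xp, Hm xm & x = x0 + xp + xm]),
        invariant_set V H0 /\ pure_isometry_on ip V H0 /\
          (forall x, Hp x -> V x = x) /\ (forall x, Hm x -> V x = - x),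
        invariant_set A H0 /\ invariant_set A Hp /\ invariant_set A Hm &
        (positive_op ip (fun x => A (V x)) ->
           (forall x, Hm x -> x = 0) /\ (forall x, (exists xp xm, [/\ Hp xp, Hm xm & x = xp + xm]) -> V x = x))].
Proof.
exists (CS EE), (fun x => V x = x), (fun x => V x = - x).
split.
  split; first exact: (CS_closed_subspace Hip).
  have [[h01 h02] h03] := eig_closed 1; have [[h11 h12] h13] := eig_closed (-1).
  split.
    split; [split|].
    - by move: h01 => /=; rewrite scale1r.
    - by move=> a x y hx hy; have := h02 a x y; rewrite /= !scale1r; apply.
    - move=> u x hu hc; have := h03 u x; rewrite /= scale1r; apply => // n.
      by rewrite scale1r.
  split; [split|].
  - by move: h11 => /=; rewrite scaleN1r.
  - by move=> a x y hx hy; have := h12 a x y; rewrite /= !scaleN1r; apply.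
  - move=> u x hu hc; have := h13 u x; rewrite /= scaleN1r; apply => // n.
    by rewrite scaleN1r.
split.
- split; first by move=> x y hx hy; apply: (orth_eig hx _ eig1); rewrite scale1r.
  split; first by move=> x y hx hy; apply: (orth_eig hx _ eigN1); rewrite scaleN1r.
  by move=> x y hx hy; apply: orth_pm.
- exact: decomp.
- split.
    move=> x hx; apply: (CS_map Hip (Vlin HV)) hx.
    + by move=> z; rewrite (nsqV HV).
    + move=> y [k [i [hi ->]]]; apply: (CS_sub Hip); by exists k.+1, i.
  by split; [exact: pure | split].
- split; first exact: A_H0.
  split; first by move=> x hx; apply: (Ainv_p Hip HV HVs Hhankel).
  by move=> x hx; apply: (Ainv_m Hip HV HVs HA Hhankel).
- move=> [hpos _].
  have hm0 : forall x, V x = - x -> x = 0.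
    move=> x hx.
    have h1 := hpos x; rewrite hx (linN (Alin HA)) (ipNl Hip) oppr_ge0 in h1.
    have h2 : ip (A x) x = 0 by apply/eqP; rewrite eq_le h1 (Apos HApos).
    have hAx := Azero Hip HA HApos h2.
    by apply: (Ainj HApos); rewrite hAx (lin0 (Alin HA)).
  split => // x [xp [xm [hp hm ->]]].
  by rewrite (hm0 _ hm) addr0.
Qed.
End Main.


Unset Implicit Arguments.

Theorem mainTheorem6 (R : realType) (H : lmodType R[i]) (ip : H -> H -> R[i])
  (Hip : inner_product ip) (Hcomp : complete_space ip) (Hsep : separable_space ip)
  (A V Vs : H -> H)
  (HA : bounded_op ip A) (HApos : positive_op ip A)
  (HV : isometry_op ip V) (HVs : is_adjoint ip V Vs)
  (Hhankel : forall x, Vs (A x) = A (V x)) :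
  exists H0 Hp Hm : H -> Prop,
    (closed_subspace ip H0 /\ closed_subspace ip Hp /\ closed_subspace ip Hm) /\
    [/\ orthogonal_sets ip H0 Hp /\ orthogonal_sets ip H0 Hm /\ orthogonal_sets ip Hp Hm,
        (forall x, exists x0 xp xm, [/\ H0 x0, Hp xp, Hm xm & x = x0 + xp + xm]),
        invariant_set V H0 /\ pure_isometry_on ip V H0 /\
          (forall x, Hp x -> V x = x) /\ (forall x, Hm x -> V x = - x),
        invariant_set A H0 /\ invariant_set A Hp /\ invariant_set A Hm &
        (positive_op ip (fun x => A (V x)) ->
           (forall x, Hm x -> x = 0) /\ (forall x, (exists xp xm, [/\ Hp xp, Hm xm & x = xp + xm]) -> V x = x))].
Proof.
case: Hsep => d hd.
exact: (main_sec Hip HV HVs HA HApos Hhankel Hcomp hd).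
Qed.
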